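(* Let $G$ be a bipartite graph with bipartition $A\cup B$ such that every vertex $a\in A$ has degree exactly $2$. Then there exists a subset $X\subseteq B$ with $|X|\le\frac{|A|+|B|}{3}$ such that every vertex of $A$ has a neighbour in $X$. *)

(* Defs.v *)
(* A finite bipartite graph with bipartition A ∪ B is given by
   two finite vertex types A, B and an adjacency relation e : A -> B -> bool
   (edges only go between the two sides; simple graph, so the degree of a is
   the number of its neighbours). *)
From mathcomp Require Import all_boot.
Set Implicit Arguments. Unset Strict Implicit. Unset Printing Implicit Defensive.

Definition nbhd (A B : finType) (e : A -> B -> bool) (a : A) : {set B} :=
  [set b | e a b].

(* Main.v *)
Require Import Defs.
From mathcomp Require Import all_boot.
From mathcomp Require Import zify.

Lemma lemma3_aux (A B : finType) (e : A -> B -> bool)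
  (hdeg : forall a : A, #|nbhd e a| = 2) (n : nat) :
  forall (E : {set A}) (S : {set B}), #|E| <= n ->
  (forall a, a \in E -> nbhd e a \subset S) ->
  exists X : {set B}, 3 * #|X| <= #|E| + #|S| /\
    (forall a, a \in E -> exists2 b, b \in X & e a b).
Proof.
elim: n => [|n IH] E S hE hsub.
  have E0 : E = set0 by apply/cards0_eq; lia.
  by exists set0; split; [rewrite cards0 | move=> a; rewrite E0 inE].
case: (set_0Vmem E) => [E0|[a aE]].
  by exists set0; split; [rewrite cards0 | move=> x; rewrite E0 inE].
move: (hdeg a) => /eqP /cards2P [u [v [uv Nuv]]].
have : u \in nbhd e a by rewrite Nuv !inE eqxx.
rewrite inE => eu.
have : v \in nbhd e a by rewrite Nuv !inE eqxx orbT.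
rewrite inE => ev.
have uS : u \in S by apply: (subsetP (hsub a aE)); rewrite Nuv !inE eqxx.
have vS : v \in S by apply: (subsetP (hsub a aE)); rewrite Nuv !inE eqxx orbT.
have case1 : forall w a', w \in S -> a' \in E -> a' != a -> e a w -> e a' w ->
  exists X : {set B}, 3 * #|X| <= #|E| + #|S| /\
    (forall a, a \in E -> exists2 b, b \in X & e a b).
  move=> w a' wS a'E a'a eaw ea'w.
  pose E' := [set x in E | ~~ e x w].
  have hE' : #|E'| <= n.
    have : E' \proper E.
      apply/properP; split; first by apply/subsetP=> x; rewrite inE => /andP[].
      by exists a => //; rewrite inE eaw andbF.
    move/proper_card; move: #|E| #|E'| hE => p q H1 H2; clear -H1 H2; lia.
  have hsub' : forall x, x \in E' -> nbhd e x \subset S :\ w.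
    move=> x; rewrite inE => /andP [xE nxw]; apply/subsetP => b bN.
    rewrite !inE (subsetP (hsub x xE) b bN) andbT.
    apply/eqP => bw; move: bN; rewrite inE bw; by rewrite (negbTE nxw).
  have [X' [hX' cX']] := IH E' (S :\ w) hE' hsub'.
  exists (w |: X'); split.
    have h1 := cardsU1 w X'.
    have h2 := cardsD1 w S; rewrite wS in h2.
    have h3 := cardsID [set x | e x w] E.
    have eq1 : E :\: [set x | e x w] = E'.
      by apply/setP => x; rewrite !inE andbC.
    rewrite eq1 in h3.
    have h4 : 2 <= #|E :&: [set x | e x w]|.
      have <- : #|[set a; a']| = 2 by rewrite cards2 eq_sym a'a.
      apply: subset_leq_card; apply/subsetP => x; rewrite !inE.
      by case/orP => /eqP ->; rewrite ?aE ?eaw ?a'E ?ea'w.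
    have h1' : #|w |: X'| <= 1 + #|X'| by rewrite h1; case: (w \notin X').
    have h2' : #|S| = 1 + #|S :\ w| by [].
    move: h1' h2' h3 h4 hX'.
    move: #|w |: X'| #|X'| #|S| #|S :\ w| #|E :&: [set x | e x w]| #|E| #|E'|.
    move=> x1 x s s' c e0 e' H1 H2 H3 H4 H5; clear -H1 H2 H3 H4 H5; lia.
  move=> x xE; case exw : (e x w).
    by exists w; rewrite // setU11.
  have xE' : x \in E' by rewrite inE xE exw.
  by have [b bX eb] := cX' x xE'; exists b; rewrite // setU1r.
case: (pickP [pred x | (x \in E) && (x != a) && e x u]) => [a' /andP[/andP[? ?] ?]|hu].
  exact: (case1 u a').
case: (pickP [pred x | (x \in E) && (x != a) && e x v]) => [a' /andP[/andP[? ?] ?]|hv].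
  exact: (case1 v a').
pose E' := E :\ a.
have hE' : #|E'| <= n by move: (cardsD1 a E); rewrite aE /E' /=; move: #|E| #|E :\ a| hE => *; lia.
have hsub' : forall x, x \in E' -> nbhd e x \subset S :\ u :\ v.
  move=> x; rewrite !inE => /andP [xa xE]; apply/subsetP => b bN.
  rewrite !inE (subsetP (hsub x xE) b bN) andbT.
  rewrite inE in bN.
  apply/andP; split; apply/eqP => bw; subst b.
    by move: (hv x); rewrite /= xE xa bN.
  by move: (hu x); rewrite /= xE xa bN.
have [X' [hX' cX']] := IH E' (S :\ u :\ v) hE' hsub'.
exists (u |: X'); split.
  have h1 : #|u |: X'| <= 1 + #|X'|.
    by rewrite cardsU1; case: (u \notin X').
  have h2 : #|S| = 1 + #|S :\ u| by rewrite (cardsD1 u S) uS.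
  have h3 : #|S :\ u| = 1 + #|S :\ u :\ v|.
    by rewrite (cardsD1 v (S :\ u)) !inE vS eq_sym uv.
  have h4 : #|E| = 1 + #|E'| by rewrite (cardsD1 a E) aE.
  move: h1 h2 h3 h4 hX'.
  move: #|u |: X'| #|X'| #|S| #|S :\ u| #|S :\ u :\ v| #|E| #|E'|.
  move=> x1 x s s' s'' e0 e' H1 H2 H3 H4 H5; clear -H1 H2 H3 H4 H5; lia.
move=> x xE; case: (eqVneq x a) => [->|xa].
  by exists u; rewrite // setU11.
have xE' : x \in E' by rewrite !inE xa xE.
by have [b bX eb] := cX' x xE'; exists b; rewrite // setU1r.
Qed.

Theorem lemma3 (A B : finType) (e : A -> B -> bool)
  (hdeg : forall a : A, #|nbhd e a| = 2) :
  exists X : {set B},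
    3 * #|X| <= #|A| + #|B| /\ (forall a : A, exists2 b, b \in X & e a b).
Proof.
have [X [h1 h2]] := @lemma3_aux A B e hdeg #|[set: A]| [set: A] [set: B] (leqnn _)
  (fun a _ => subsetT _).
exists X; split; first by rewrite !cardsT in h1.
by move=> a; apply: h2; rewrite inE.
Qed.
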